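(* Let $P>2$ and $L$ be integers and let $\sigma,\tau\in\mathbb{Z}_P$ satisfy: (i) $\sigma,\tau\in\mathbb{Z}_P^{*}$; (ii) $L/2=\mathrm{ord}(\sigma)$; (iii) $2\le \mathrm{ord}(\sigma)$; (iv) $\mathrm{ord}(\sigma)\neq \#\mathbb{Z}_P^{*}$; (v) $1-\sigma^{j}\in\mathbb{Z}_P^{*}$ for all $1\le j<\mathrm{ord}(\sigma)$; (vi) $\tau\notin\{1,\sigma,\sigma^2,\dots,\sigma^{\mathrm{ord}(\sigma)-1}\}$. Define the $2P\times LP$ binary matrices $\hat H_C=(I(c_{j,\ell}))_{0\le j<2,\,0\le \ell<L}$ and $\hat H_D=(I(d_{j,\ell}))_{0\le j<2,\,0\le \ell<L}$ (block matrices with $P\times P$ blocks), where, with all arithmetic in $\mathbb{Z}_P$, $c_{j,\ell}=\sigma^{\ell-j}$ for $0\le\ell<L/2$ and $c_{j,\ell}=\tau\sigma^{\ell-j}$ for $L/2\le \ell<L$; $d_{j,\ell}=-\tau\sigma^{j-\ell}$ for $0\le\ell<L/2$ and $d_{j,\ell}=-\sigma^{j-\ell}$ for $L/2\le\ell<L$. Write $\hat H_C=(\hat c_{m,n})$, $\hat H_D=(\hat d_{m,n})$ with $0\le m<2P$, $0\le n<LP$. For a row index $0\le m'<2P$, let $N(m')=\{0\le n<LP \mid \hat d_{m',n}\neq 0\}$ (the support of the $m'$-th row of $\hat H_D$) and $E(m')=\{(m,n)\mid \hat c_{m,n}\neq 0,\ n\in N(m')\}$. Then for every $0\le m'<2P$,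 the $L$ variable nodes of the Tanner graph of $\hat H_C$ corresponding to the columns in $N(m')$, together with their adjacent check nodes, form a cycle of length $2L$. More precisely, there exist $L$ distinct row indices $m_0,\dots,m_{L-1}$ and $L$ distinct column indices $n_0,\dots,n_{L-1}$ such that $$\{(m_{2i-1},n_{2i}),\ (m_{2i},n_{2i}),\ (m_{2i},n_{2i+1}),\ (m_{2i+1},n_{2i+1}) \mid 0\le i<L/2\}=E(m'),$$ where $m_{-1}:=m_{L-1}$.
   Context: Rows and columns are indexed from $0$. $\mathbb{Z}_P^{*}=\{z\in\mathbb{Z}_P\mid \exists a\in\mathbb{Z}_P,\ za=1\}$ is the group of units of $\mathbb{Z}_P$, and $\mathrm{ord}(\sigma)=\min\{m>0\mid \sigma^m=1\}$; negative powers of $\sigma$ are taken in $\mathbb{Z}_P^{*}$. $I(1)$ is the $P\times P$ binary cyclic permutation matrix whose $r$-th row has its single $1$ in column $r+1 \bmod P$, and $I(c):=I(1)^{c}$ for $c\in\mathbb{Z}_P$ (so row $r$ of $I(c)$ has its single $1$ in column $r+c\bmod P$). The Tanner graph of a binary matrix $H$ is the bipartite graph with one check node per row, one variable node per column, and an edge between check node $m$ and variable node $n$ iff the $(m,n)$ entry of $H$ is nonzero. *)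

(* Defs.v *)
From HB Require Import structures.
From mathcomp Require Import all_boot all_order all_algebra.
Set Implicit Arguments. Unset Strict Implicit. Unset Printing Implicit Defensive.
Import Order.TTheory GRing.Theory Num.Theory.

Local Open Scope ring_scope.

Definition is_ord (P : nat) (s : 'Z_P) (k : nat) : Prop :=
  (0 < k)%N /\ s ^+ k = 1 /\ (forall m : nat, (0 < m)%N -> s ^+ m = 1 -> (k <= m)%N).

Definition unitsZ (P : nat) : {set 'Z_P} := [set z : 'Z_P | z \is a GRing.unit].

(* entry (r, s) of the P x P cyclic permutation matrix I(c):
   row r has its single 1 in column r + c mod P *)
Definition Ientry (P : nat) (c : 'Z_P) (r s : nat) : nat := (s == (r + c) %% P)%N.

Definition Imx (P : nat) (c : 'Z_P) : 'M[nat]_P :=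
  \matrix_(r < P, s < P) Ientry c r s.

Definition blockI (P J L : nat) (f : nat -> nat -> 'Z_P) : 'M[nat]_(J * P, L * P) :=
  \matrix_(m < J * P, n < L * P)
     Ientry (f (m %/ P)%N (n %/ P)%N) (m %% P)%N (n %% P)%N.

(* exponents are integers; negative powers are inverses in Z_P^* *)
Definition cexp (P L : nat) (s t : 'Z_P) (j l : nat) : 'Z_P :=
  if (l < L %/ 2)%N then s ^ (l%:Z - j%:Z) else t * s ^ (l%:Z - j%:Z).

Definition dexp (P L : nat) (s t : 'Z_P) (j l : nat) : 'Z_P :=
  if (l < L %/ 2)%N then - (t * s ^ (j%:Z - l%:Z)) else - (s ^ (j%:Z - l%:Z)).

Definition HC (P L : nat) (s t : 'Z_P) : 'M[nat]_(2 * P, L * P) :=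
  blockI 2 L (cexp L s t).
Definition HD (P L : nat) (s t : 'Z_P) : 'M[nat]_(2 * P, L * P) :=
  blockI 2 L (dexp L s t).

Definition Nset (P L : nat) (s t : 'Z_P) (m' : 'I_(2 * P)) : {set 'I_(L * P)} :=
  [set n | HD L s t m' n != 0%N].

Definition Eset (P L : nat) (s t : 'Z_P) (m' : 'I_(2 * P))
  : {set 'I_(2 * P) * 'I_(L * P)} :=
  [set mn | (HC L s t mn.1 mn.2 != 0%N) && (mn.2 \in Nset L s t m')].

(* Main.v *)
From HB Require Import structures.
From mathcomp Require Import all_boot all_order all_algebra.
From mathcomp Require Import ring zify.
Require Import Defs.
Set Implicit Arguments. Unset Strict Implicit. Unset Printing Implicit Defensive.
Import Order.TTheory GRing.Theory Num.Theory.
Local Open Scope ring_scope.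

Lemma zexpD (R : comUnitRingType) (s : R) (x y : int) :
  s \is a GRing.unit -> s ^ (x + y) = s ^ x * s ^ y.
Proof. by move=> u; rewrite exprzDr. Qed.

Lemma zper (R : comUnitRingType) (s : R) (k : nat) (a b n : int) :
  s \is a GRing.unit -> s ^+ k = 1 -> a = b + n * k%:Z -> s ^ a = s ^ b.
Proof.
move=> u sk ->; rewrite zexpD // [n * _]mulrC -exprz_exp.
by have -> : s ^ k%:Z = 1 by []; rewrite exp1rz mulr1.
Qed.

Lemma zred (R : comUnitRingType) (s : R) (k : nat) (c : int) :
  s \is a GRing.unit -> s ^+ k = 1 -> (0 < k)%N ->
  exists w : nat, (w < k)%N /\ s ^ c = s ^+ w.
Proof.
move=> u sk k0.
have kn0 : k%:Z != 0 by lia.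
have := modz_ge0 c kn0; have := ltz_pmod c (d:=k%:Z) (ltac:(lia)).
case E: (c %% k%:Z)%Z => [w|w] // lt _.
exists w; split; first by lia.
change (s ^ c = s ^ (Posz w)).
apply: (zper u sk (n := (c %/ k%:Z)%Z)).
by rewrite {1}(divz_eq c k%:Z) E addrC.
Qed.

Lemma zinv (R : comUnitRingType) (s : R) (x : int) :
  s \is a GRing.unit -> s ^ (- x) * s ^ x = 1.
Proof. by move=> u; rewrite -zexpD // addNr expr0z. Qed.

Lemma key (R : comUnitRingType) (s t : R) (k : nat) (a b : int) (u v : nat) :
  s \is a GRing.unit -> s ^+ k = 1 -> (0 < k)%N ->
  (forall j : nat, (1 <= j < k)%N -> (1 - s ^+ j) \is a GRing.unit) ->
  (forall j : nat, (j < k)%N -> t != s ^+ j) ->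
  (u < k)%N -> (v < k)%N ->
  t * s ^ (a - u%:Z) + s ^ (u%:Z - b) = t * s ^ (a - v%:Z) + s ^ (v%:Z - b) -> u = v.
Proof.
move=> su sk k0 h5 h6.
wlog: u v / (u <= v)%N => [W uk vk H|].
  case: (leqP u v) => uv; first exact: W.
  by symmetry; apply: (W v u (ltnW uv) vk uk); rewrite H.
move=> uv uk vk H.
case: (eqVneq u v) => // /eqP neq; exfalso.
have uv' : (u < v)%N by lia.
have eV : s ^ (v%:Z) = s ^ (u%:Z) * s ^+ (v - u) by
  rewrite -[s ^+ (v - u)]/(s ^ (Posz (v - u))) -zexpD //; congr (_ ^ _); lia.
have unV : (s ^ (v%:Z) - s ^ (u%:Z)) \is a GRing.unit.
  rewrite eV -{2}[s ^ (u%:Z)]mulr1 -mulrBr unitrM.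
  apply/andP; split; first exact: unitrXz.
  by rewrite -opprB unitrN h5 //; lia.
move: H; rewrite !zexpD //.
set A := s ^ a; set U := s ^ (u%:Z); set V := s ^ (v%:Z); set Ui := s ^ (- u%:Z);
set Vi := s ^ (- v%:Z); set Bi := s ^ (- b) => H.
have hU : Ui * U = 1 by apply: zinv.
have hV : Vi * V = 1 by apply: zinv.
have G : (t * A - Bi * U * V) * (V - U) = 0.
  have -> : (t * A - Bi * U * V) * (V - U) =
     (t * (A * Ui) + U * Bi - (t * (A * Vi) + V * Bi)) * U * V
     + t * A * V * (1 - Ui * U) - t * A * U * (1 - Vi * V) by ring.
  by rewrite H hU hV !subrr !mulr0 !mul0r addr0 subr0.
have G2 : t * A = Bi * U * V.
  apply/eqP; rewrite -subr_eq0; apply/eqP.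
  by rewrite -[LHS](mulrK unV) G mul0r.
have : t = s ^ (- b + u%:Z + v%:Z + - a).
  rewrite !zexpD // -/A -/U -/V -/Bi -G2.
  by rewrite -mulrA [A * _]mulrC zinv // mulr1.
have [w [wk ->]] := zred (- b + u%:Z + v%:Z + - a) su sk k0.
by move/eqP; rewrite (negbTE (h6 w wk)).
Qed.

Definition mk (p q : nat) (d : 'I_(q * p.+3)) (j : nat) (x : 'Z_(p.+3)) : 'I_(q * p.+3) :=
  insubd d (j * p.+3 + x)%N.

Lemma mk_val p q d j x : (j < q)%N -> val (@mk p q d j x) = (j * p.+3 + x)%N.
Proof.
move=> jq; rewrite val_insubd ifT //.
have xl : (x < p.+3)%N := ltn_ord x.
have : (j.+1 * p.+3 <= q * p.+3)%N by rewrite leq_mul2r jq orbT.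
rewrite mulSn; lia.
Qed.

Lemma mk_div p q d j x : (j < q)%N -> (val (@mk p q d j x) %/ p.+3)%N = j.
Proof.
move=> jq; rewrite mk_val // divnMDl // divn_small ?addn0 //; exact: ltn_ord.
Qed.

Lemma mk_mod p q d j x : (j < q)%N -> (inZp (val (@mk p q d j x)) : 'Z_(p.+3)) = x.
Proof.
move=> jq; apply: val_inj => /=; rewrite mk_val // modnMDl modn_small //; exact: ltn_ord.
Qed.

Lemma mk_eta p q d (m : 'I_(q * p.+3)) : m = @mk p q d (m %/ p.+3)%N (inZp m).
Proof.
apply: val_inj; rewrite mk_val /=; last by rewrite ltn_divLR.
by rewrite {1}(divn_eq m p.+3).
Qed.

Lemma mk_inj p q d j x j2 x2 : (j < q)%N -> (j2 < q)%N ->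
  @mk p q d j x = @mk p q d j2 x2 -> j = j2 /\ x = x2.
Proof.
move=> jq j2q e; split.
  by rewrite -(mk_div d x jq) e mk_div.
by rewrite -(mk_mod d x jq) e mk_mod.
Qed.

Lemma Ient p (c : 'Z_(p.+3)) (a b : nat) :
  (Ientry c (a %% p.+3) (b %% p.+3) != 0%N) <-> ((inZp b : 'Z_(p.+3)) = inZp a + c).
Proof.
rewrite /Ientry; case: (b %% p.+3 =P (a %% p.+3 + c) %% p.+3)%N => e /=; split => // h.
- by apply: val_inj => /=; rewrite e modnDml.
- by exfalso; apply: e; have /= -> := congr1 val h; rewrite modnDml.
Qed.

Definition bidx (k j i : nat) : nat := if (i <= j)%N then (j - i)%N else (j + k - i)%N.
Definition sc (k i : nat) : nat := if i.+1 == k then 0%N else i.+1.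

Lemma cA P k (s t : 'Z_P) j i : (i < k)%N -> cexp (2 * k)%N s t j i = s ^ (i%:Z - j%:Z).
Proof. by move=> ik; rewrite /cexp mulKn // ik. Qed.
Lemma cB P k (s t : 'Z_P) j i : (k <= i)%N -> cexp (2 * k)%N s t j i = t * s ^ (i%:Z - j%:Z).
Proof. by move=> ik; rewrite /cexp mulKn // ltnNge ik. Qed.
Lemma dA P k (s t : 'Z_P) j i : (i < k)%N -> dexp (2 * k)%N s t j i = - (t * s ^ (j%:Z - i%:Z)).
Proof. by move=> ik; rewrite /dexp mulKn // ik. Qed.
Lemma dB P k (s t : 'Z_P) j i : (k <= i)%N -> dexp (2 * k)%N s t j i = - s ^ (j%:Z - i%:Z).
Proof. by move=> ik; rewrite /dexp mulKn // ltnNge ik. Qed.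

Ltac per su sk :=
  first [ apply: (zper su sk (n := 0)); lia
        | apply: (zper su sk (n := 1)); lia
        | apply: (zper su sk (n := -1)); lia
        | apply: (zper su sk (n := 2)); lia
        | apply: (zper su sk (n := -2)); lia ].

Lemma I0 P (s t : 'Z_P) k j i : s \is a GRing.unit -> s ^+ k = 1 -> (j < 2)%N -> (2 <= k)%N ->
  (i < k)%N ->
  dexp (2 * k)%N s t j i - cexp (2 * k)%N s t 0%N i =
  dexp (2 * k)%N s t j (k + bidx k j i)%N - cexp (2 * k)%N s t 0%N (k + bidx k j i)%N.
Proof.
move=> su sk j2 k2 ik.
rewrite (dA s t j ik) (cA s t 0 ik) (@dB P k s t j (k + bidx k j i)%N (leq_addr _ _)) (@cB P k s t 0 (k + bidx k j i)%N (leq_addr _ _)).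
have e1 : s ^ (j%:Z - (k + bidx k j i)%N%:Z) = s ^ (i%:Z - 0%:Z).
  by rewrite /bidx; case: leqP => h; per su sk.
have e2 : s ^ ((k + bidx k j i)%N%:Z - 0%:Z) = s ^ (j%:Z - i%:Z).
  by rewrite /bidx; case: leqP => h; per su sk.
by rewrite e1 e2 addrC.
Qed.

Lemma I1 P (s t : 'Z_P) k j i : s \is a GRing.unit -> s ^+ k = 1 -> (j < 2)%N -> (2 <= k)%N ->
  (i < k)%N ->
  dexp (2 * k)%N s t j (k + bidx k j i)%N - cexp (2 * k)%N s t 1%N (k + bidx k j i)%N =
  dexp (2 * k)%N s t j (sc k i) - cexp (2 * k)%N s t 1%N (sc k i).
Proof.
move=> su sk j2 k2 ik.
have sck : (sc k i < k)%N by rewrite /sc; case: eqP => h; lia.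
rewrite (dB s t j (leq_addr _ _)) (cB s t 1 (leq_addr _ _)) (dA s t j sck) (cA s t 1 sck).
have e1 : s ^ (j%:Z - (k + bidx k j i)%N%:Z) = s ^ ((sc k i)%:Z - 1%:Z).
  by rewrite /bidx /sc; case: leqP => h; case: eqP => h'; per su sk.
have e2 : s ^ ((k + bidx k j i)%N%:Z - 1%:Z) = s ^ (j%:Z - (sc k i)%:Z).
  by rewrite /bidx /sc; case: leqP => h; case: eqP => h'; per su sk.
by rewrite e1 e2 addrC.
Qed.

Lemma sel_even T (f g : nat -> T) i :
  (if ((2 * i) %% 2 == 1)%N then f ((2 * i) %/ 2)%N else g ((2 * i) %/ 2)%N) = g i.
Proof. by rewrite modnMr mulKn. Qed.

Lemma sel_odd T (f g : nat -> T) i :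
  (if (((2 * i).+1) %% 2 == 1)%N then f (((2 * i).+1) %/ 2)%N else g (((2 * i).+1) %/ 2)%N) = f i.
Proof.
have -> : (((2 * i).+1) %% 2 = 1)%N by lia.
by have -> : (((2 * i).+1) %/ 2 = i)%N by lia.
Qed.

Lemma mk_pair p q q' (d : 'I_(q * p.+3)) (d' : 'I_(q' * p.+3)) j x l y J X L Y :
  (j < q)%N -> (J < q)%N -> (l < q')%N -> (L < q')%N ->
  ((mk d j x, mk d' l y) = (mk d J X, mk d' L Y)) <-> (j = J /\ x = X /\ l = L /\ y = Y).
Proof.
move=> jq Jq lq Lq; split.
  case=> /(mk_inj jq Jq) [-> ->] /(mk_inj lq Lq) [-> ->]; done.
by case=> -> [-> [-> ->]].
Qed.

Lemma Ein p k (s t : 'Z_(p.+3)) (m' : 'I_(2 * p.+3)) (n0 : 'I_((2 * k) * p.+3)) j x l y :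
  (j < 2)%N -> (l < 2 * k)%N ->
  ((mk m' j x, mk n0 l y) \in Eset (2 * k)%N s t m') <->
  (y = x + cexp (2 * k)%N s t j l /\ y = inZp m' + dexp (2 * k)%N s t (m' %/ p.+3)%N l).
Proof.
move=> j2 lk.
rewrite inE /= /Nset inE /HC /HD /blockI !mxE.
rewrite !mk_div //.
split.
  by case/andP => /Ient h1 /Ient h2; rewrite !mk_mod // in h1 h2.
by case=> h1 h2; apply/andP; split; apply/Ient; rewrite !mk_mod.
Qed.

Definition mE p k (s t : 'Z_(p.+3)) (m' : 'I_(2 * p.+3)) i : 'I_(2 * p.+3) :=
  mk m' 0 (inZp m' + dexp (2 * k)%N s t (m' %/ p.+3)%N i - cexp (2 * k)%N s t 0%N i).
Definition mO p k (s t : 'Z_(p.+3)) (m' : 'I_(2 * p.+3)) i : 'I_(2 * p.+3) :=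
  mk m' 1 (inZp m' + dexp (2 * k)%N s t (m' %/ p.+3)%N (sc k i) - cexp (2 * k)%N s t 1%N (sc k i)).
Definition nA p k (s t : 'Z_(p.+3)) (m' : 'I_(2 * p.+3)) (n0 : 'I_((2 * k) * p.+3)) i :=
  mk n0 i (inZp m' + dexp (2 * k)%N s t (m' %/ p.+3)%N i).
Definition nB p k (s t : 'Z_(p.+3)) (m' : 'I_(2 * p.+3)) (n0 : 'I_((2 * k) * p.+3)) i :=
  mk n0 (k + bidx k (m' %/ p.+3) i)%N
    (inZp m' + dexp (2 * k)%N s t (m' %/ p.+3)%N (k + bidx k (m' %/ p.+3) i)%N).

Lemma bidx_lt k j i : (j < 2)%N -> (2 <= k)%N -> (i < k)%N -> (bidx k j i < k)%N.
Proof. by move=> *; rewrite /bidx; case: (leqP i j) => *; lia. Qed.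
Lemma sc_lt k i : (i < k)%N -> (sc k i < k)%N.
Proof. by move=> *; rewrite /sc; case: eqP => *; lia. Qed.

Lemma canc (R : zmodType) (r X Y X' Y' : R) : r + - X - Y = r + - X' - Y' -> X + Y = X' + Y'.
Proof. by move=> h; apply: oppr_inj; apply: (addrI r); rewrite !opprD !addrA. Qed.

Lemma mk_pairE p q q' (d : 'I_(q * p.+3)) (d' : 'I_(q' * p.+3)) j x l y J X L Y :
  (mk d j x, mk d' l y) = (mk d J X, mk d' L Y) ->
  (j < q)%N -> (J < q)%N -> (l < q')%N -> (L < q')%N ->
  j = J /\ x = X /\ l = L /\ y = Y.
Proof. by move=> H jq Jq lq Lq; apply/(mk_pair d d' x y X Y jq Jq lq Lq). Qed.

Lemma main (p L : nat) (sigma tau : 'Z_(p.+3)) (k : nat) :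
  (2 < p.+3)%N ->
  sigma \is a GRing.unit -> tau \is a GRing.unit ->
  is_ord sigma k ->
  L = (2 * k)%N ->
  (2 <= k)%N ->
  k != #|unitsZ p.+3| ->
  (forall j : nat, (1 <= j < k)%N -> (1 - sigma ^+ j) \is a GRing.unit) ->
  (forall j : nat, (j < k)%N -> tau != sigma ^+ j) ->
  forall m' : 'I_(2 * p.+3),
  exists (ms : nat -> 'I_(2 * p.+3)) (ns : nat -> 'I_(L * p.+3)),
    (forall a b : nat, (a < L)%N -> (b < L)%N -> ms a = ms b -> a = b) /\
    (forall a b : nat, (a < L)%N -> (b < L)%N -> ns a = ns b -> a = b) /\
    (forall x : 'I_(2 * p.+3) * 'I_(L * p.+3),
       x \in Eset L sigma tau m' <->
       exists i : nat, (i < L %/ 2)%N /\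
         (x = (ms (if i == 0%N then L.-1 else (2 * i).-1), ns (2 * i)%N) \/
          x = (ms (2 * i)%N, ns (2 * i)%N) \/
          x = (ms (2 * i)%N, ns (2 * i).+1) \/
          x = (ms (2 * i).+1, ns (2 * i).+1))).
Proof.
move=> _ su tu [k0 [sk _]] -> k2 _ h5 h6 m'.
have LN : (0 < (2 * k) * p.+3)%N by rewrite muln_gt0; apply/andP; split; lia.
pose n0 : 'I_((2 * k) * p.+3) := Ordinal LN.
have j2 : (m' %/ p.+3 < 2)%N by rewrite ltn_divLR.
set j' := (m' %/ p.+3)%N in j2 *.
set r0 : 'Z_(p.+3) := inZp m'.
exists (fun a => if (a %% 2 == 1)%N then @mO p k sigma tau m' (a %/ 2)%N
                else @mE p k sigma tau m' (a %/ 2)%N).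
exists (fun a => if (a %% 2 == 1)%N then @nB p k sigma tau m' n0 (a %/ 2)%N
                else @nA p k sigma tau m' n0 (a %/ 2)%N).
split; [|split].
- move=> a b aL bL.
  case: ifP => ha; case: ifP => hb.
  + rewrite /mO => /mk_inj [] // _ e.
    have sa := sc_lt (ltac:(lia) : (a %/ 2 < k)%N).
    have sb := sc_lt (ltac:(lia) : (b %/ 2 < k)%N).
    rewrite (dA _ _ _ sa) (cA _ _ _ sa) (dA _ _ _ sb) (cA _ _ _ sb) in e.
    have := key su sk k0 h5 h6 sa sb (canc e).
    by rewrite /sc; case: eqP; case: eqP; lia.
  + by rewrite /mO /mE => /mk_inj [].
  + by rewrite /mO /mE => /mk_inj [].
  + rewrite /mE => /mk_inj [] // _ e.
    have sa : (a %/ 2 < k)%N by lia.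
    have sb : (b %/ 2 < k)%N by lia.
    rewrite (dA _ _ _ sa) (cA _ _ _ sa) (dA _ _ _ sb) (cA _ _ _ sb) in e.
    have := key su sk k0 h5 h6 sa sb (canc e).
    lia.
- move=> a b aL bL.
  have ba := bidx_lt j2 k2 (ltac:(lia) : (a %/ 2 < k)%N).
  have bb := bidx_lt j2 k2 (ltac:(lia) : (b %/ 2 < k)%N).
  case: ifP => ha; case: ifP => hb; rewrite /nA /nB -/j' => /mk_inj [] //; try lia;
  move=> e _; move: e; rewrite /bidx; case: (leqP (a %/ 2) j'); case: (leqP (b %/ 2) j'); lia.
- move=> [m n].
  have [j [x [jl ->]]] : exists j x, (j < 2)%N /\ m = mk m' j x.
    by exists (m %/ p.+3)%N, (inZp m); split; [rewrite ltn_divLR | exact: mk_eta].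
  have [l [y [ll ->]]] : exists l y, (l < 2 * k)%N /\ n = mk n0 l y.
    by exists (n %/ p.+3)%N, (inZp n); split; [rewrite ltn_divLR | exact: mk_eta].
  rewrite Ein // mulKn //.
  split.
  + case=> h1 h2; rewrite -/r0 -/j' in h2.
    have ex1 : x = r0 + dexp (2 * k)%N sigma tau j' l - cexp (2 * k)%N sigma tau j l.
      by rewrite -h2 h1 addrK.
    case: (ltnP l k) => lk.
    * exists l; split => //.
      have [ej|ej] : j = 0%N \/ j = 1%N by lia.
      - subst j; right; left.
        rewrite sel_even sel_even /mE /nA -/j' -/r0.
        by congr (mk _ _ _, mk _ _ _).
      - subst j; left.
        case: (posnP l) => [l0|lp].
        + subst l.
          have -> : ((2 * k).-1 = (2 * (k - 1)).+1)%N by lia.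
          rewrite sel_odd (sel_even (nB sigma tau m' n0) (nA sigma tau m' n0) 0) /mO /nA -/j' -/r0.
          have -> : sc k (k - 1) = 0%N by rewrite /sc; case: eqP => *; lia.
          by congr (mk _ _ _, mk _ _ _).
        + 
          have -> : ((2 * l).-1 = (2 * (l - 1)).+1)%N by lia.
          rewrite sel_odd sel_even /mO /nA -/j' -/r0.
          have -> : sc k (l - 1) = l by rewrite /sc; case: eqP => *; lia.
          by congr (mk _ _ _, mk _ _ _).
    * pose i := if (l - k <= j')%N then (j' - (l - k))%N else (j' + k - (l - k))%N.
      have ik : (i < k)%N by rewrite /i; case: (leqP (l - k) j') => *; lia.
      have bi : (k + bidx k j' i)%N = l.
        rewrite /i; case: (leqP (l - k) j') => h1'; rewrite /bidx; case: leqP => h2'; lia.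
      exists i; split => //.
      have [ej|ej] : j = 0%N \/ j = 1%N by lia.
      - subst j; right; right; left.
        rewrite sel_even sel_odd /mE /nB -/j' -/r0 bi.
        congr (mk _ _ _, mk _ _ _) => //.
        by rewrite -addrA (I0 tau su sk j2 k2 ik) bi addrA.
      - subst j; right; right; right.
        rewrite sel_odd sel_odd /mO /nB -/j' -/r0 bi.
        congr (mk _ _ _, mk _ _ _) => //.
        by rewrite -addrA -(I1 tau su sk j2 k2 ik) bi addrA.
  + case=> i [ik H].
    have bB : (k + bidx k j' i < 2 * k)%N by have := bidx_lt j2 k2 ik; lia.
    have scB : (sc k i < k)%N := sc_lt ik.
    case: H => [H|[H|[H|H]]].
    * move: H; case: (posnP i) => [|ip]; rewrite ?eqxx.
      - move=> i0; subst i.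
        have -> : ((2 * k).-1 = (2 * (k - 1)).+1)%N by lia.
        rewrite sel_odd (sel_even (nB sigma tau m' n0) (nA sigma tau m' n0) 0) /mO /nA -/j' -/r0.
        have -> : sc k (k - 1) = 0%N by rewrite /sc; case: eqP => *; lia.
        move=> H.
        have [-> [-> [-> ->]]] := mk_pairE H jl (ltac:(lia)) ll (ltac:(lia)).
        by rewrite subrK.
      - have -> : ((2 * i).-1 = (2 * (i - 1)).+1)%N by lia.
        rewrite sel_odd sel_even /mO /nA -/j' -/r0.
        have -> : sc k (i - 1) = i by rewrite /sc; case: eqP => *; lia.
        move=> H.
        have [-> [-> [-> ->]]] := mk_pairE H jl (ltac:(lia)) ll (ltac:(lia)).
        by rewrite subrK.
    * move: H; rewrite sel_even sel_even /mE /nA -/j' -/r0 => H.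
      have [-> [-> [-> ->]]] := mk_pairE H jl (ltac:(lia)) ll (ltac:(lia)).
      by rewrite subrK.
    * move: H; rewrite sel_even sel_odd /mE /nB -/j' -/r0 => H.
      have [-> [-> [-> ->]]] := mk_pairE H jl (ltac:(lia)) ll bB.
      by rewrite -(addrA r0) (I0 tau su sk j2 k2 ik) addrA subrK.
    * move: H; rewrite sel_odd sel_odd /mO /nB -/j' -/r0 => H.
      have [-> [-> [-> ->]]] := mk_pairE H jl (ltac:(lia)) ll bB.
      by rewrite -(addrA r0) -(I1 tau su sk j2 k2 ik) addrA subrK.
Qed.

Theorem lemma1 (P L : nat) (sigma tau : 'Z_P) (k : nat) :
  (2 < P)%N ->
  sigma \is a GRing.unit -> tau \is a GRing.unit ->
  is_ord sigma k ->                      (* k = ord(sigma) *)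
  L = (2 * k)%N ->                        (* L/2 = ord(sigma) *)
  (2 <= k)%N ->
  k != #|unitsZ P| ->
  (forall j : nat, (1 <= j < k)%N -> (1 - sigma ^+ j) \is a GRing.unit) ->
  (forall j : nat, (j < k)%N -> tau != sigma ^+ j) ->
  forall m' : 'I_(2 * P),
  exists (ms : nat -> 'I_(2 * P)) (ns : nat -> 'I_(L * P)),
    (forall a b : nat, (a < L)%N -> (b < L)%N -> ms a = ms b -> a = b) /\
    (forall a b : nat, (a < L)%N -> (b < L)%N -> ns a = ns b -> a = b) /\
    (forall x : 'I_(2 * P) * 'I_(L * P),
       x \in Eset L sigma tau m' <->
       exists i : nat, (i < L %/ 2)%N /\
         (x = (ms (if i == 0%N then L.-1 else (2 * i).-1), ns (2 * i)%N) \/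
          x = (ms (2 * i)%N, ns (2 * i)%N) \/
          x = (ms (2 * i)%N, ns (2 * i).+1) \/
          x = (ms (2 * i).+1, ns (2 * i).+1))).
Proof.
move: sigma tau; case: P => [|[|[|p]]] sigma tau hP; try (exfalso; by []).
exact: (@main p L sigma tau k hP).
Qed.
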